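(* Let $n$ be an odd integer $\ge 3$, $F_2$ the free group on $a,b$, and $R_{\mathrm{Heis}_n}$ the kernel of the surjection $F_2\to H_n$ with $a\mapsto\alpha$, $b\mapsto\beta$. Then $R_{\mathrm{Heis}_n}$ is a characteristic subgroup of $F_2$, i.e. $\phi(R_{\mathrm{Heis}_n})=R_{\mathrm{Heis}_n}$ for every $\phi\in\operatorname{Aut}(F_2)$.
   Context: $H_n$ is the group of $3\times3$ upper unitriangular matrices over $\mathbb{Z}/n\mathbb{Z}$; $\alpha$ has entry $1$ at position $(1,2)$ and $\beta$ has entry $1$ at position $(2,3)$, all other off-diagonal entries zero. *)

(* Defs.v *)
From HB Require Import structures.
From mathcomp Require Import all_boot all_order all_algebra.
Set Implicit Arguments. Unset Strict Implicit. Unset Printing Implicit Defensive.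
Import GRing.Theory.
Local Open Scope ring_scope.

(* A letter is (g, e): g = false for a, true for b; e = true for the inverse. *)
Definition letter := (bool * bool)%type.
Definition linv (x : letter) : letter := (x.1, ~~ x.2).

Fixpoint reducedb (s : seq letter) : bool :=
  match s with
  | x :: ((y :: _) as s') => (y != linv x) && reducedb s'
  | _ => true
  end.

Definition ccons (x : letter) (s : seq letter) : seq letter :=
  match s with
  | y :: s' => if y == linv x then s' else x :: s
  | [::] => [:: x]
  end.
Definition reduce (s : seq letter) : seq letter := foldr ccons [::] s.

Lemma reducedb_ccons x s : reducedb s -> reducedb (ccons x s).
Proof.
case: s => [|y s] //= Hs.
case: ifP => Hy.
  by case: s Hs => [|z s] //= /andP[].
by rewrite /= Hy Hs.
Qed.

Lemma reducedb_reduce s : reducedb (reduce s).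
Proof. by elim: s => [|x s IH] //=; apply: reducedb_ccons. Qed.

Record F2 := MkF2 { wordF2 : seq letter; wordF2_red : reducedb wordF2 }.

Definition mulF2 (u v : F2) : F2 :=
  MkF2 (reducedb_reduce (wordF2 u ++ wordF2 v)).

Definition F2_hom (phi : F2 -> F2) : Prop :=
  forall u v, phi (mulF2 u v) = mulF2 (phi u) (phi v).
Definition F2_aut (phi : F2 -> F2) : Prop := F2_hom phi /\ bijective phi.

(* H_n is the group of upper unitriangular 3x3 matrices over 'Z_n;
   alpha = 1 + E_{12}, beta = 1 + E_{23} (1-based positions). *)
Definition i1 : 'I_3 := inord 0.
Definition i2 : 'I_3 := inord 1.
Definition i3 : 'I_3 := inord 2.

Definition alphaH (n : nat) : 'M['Z_n]_3 := 1%:M + delta_mx i1 i2.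
Definition betaH (n : nat) : 'M['Z_n]_3 := 1%:M + delta_mx i2 i3.

Definition letter_img (n : nat) (x : letter) : 'M['Z_n]_3 :=
  let g := if x.1 then betaH n else alphaH n in
  if x.2 then invmx g else g.

Definition heis_map (n : nat) (w : F2) : 'M['Z_n]_3 :=
  foldr (fun x M => letter_img n x *m M) 1%:M (wordF2 w).

Definition R_Heis (n : nat) (w : F2) : Prop := heis_map n w = 1%:M.

(* Main.v *)
Require Import Defs.
From mathcomp Require Import all_boot all_order all_algebra ring.
Set Implicit Arguments. Unset Strict Implicit. Unset Printing Implicit Defensive.
Import GRing.Theory.
Local Open Scope ring_scope.

Section Trip.
Variable R : comNzRingType.
Definition trip := (R * R * R)%type.
Definition tm (t u : trip) : trip :=
  (t.1.1 + u.1.1, t.1.2 + u.1.2, t.2 + u.2 + t.1.1 * u.1.2).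
Definition t0 : trip := (0, 0, 0).
Definition tinv (t : trip) : trip := (- t.1.1, - t.1.2, - t.2 + t.1.1 * t.1.2).

Lemma tmA t u v : tm (tm t u) v = tm t (tm u v).
Proof. case: t => [[a b] c]; case: u => [[d e] f]; case: v => [[g h] i] /=.
rewrite /tm /=; congr (_,_,_); ring. Qed.
Lemma tm0t t : tm t0 t = t.
Proof. case: t => [[a b] c]; rewrite /tm /=; congr (_,_,_); ring. Qed.
Lemma tmt0 t : tm t t0 = t.
Proof. case: t => [[a b] c]; rewrite /tm /=; congr (_,_,_); ring. Qed.
Lemma tmV t : tm t (tinv t) = t0.
Proof. case: t => [[a b] c]; rewrite /tm /=; congr (_,_,_); ring. Qed.
Lemma tmVt t : tm (tinv t) t = t0.
Proof. case: t => [[a b] c]; rewrite /tm /=; congr (_,_,_); ring. Qed.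
Lemma tinv_uniq t u : tm t u = t0 -> u = tinv t.
Proof. move=> H. by rewrite -[u]tm0t -(tmVt t) tmA H tmt0. Qed.
Lemma tidem t : tm t t = t -> t = t0.
Proof. move=> H. by rewrite -[t]tm0t -(tmVt t) tmA H. Qed.

Definition timg (X Y : trip) (x : letter) : trip :=
  let g := if x.1 then Y else X in if x.2 then tinv g else g.
Definition ev X Y (s : seq letter) : trip := foldr (fun x t => tm (timg X Y x) t) t0 s.

Lemma ev_cat X Y s1 s2 : ev X Y (s1 ++ s2) = tm (ev X Y s1) (ev X Y s2).
Proof. elim: s1 => [|x s IH] /=; first by rewrite tm0t. by rewrite IH tmA. Qed.

Lemma timg_linv X Y x : tm (timg X Y x) (timg X Y (linv x)) = t0.
Proof. case: x => [[] []]; rewrite /timg /= ?tmV ?tmVt //. Qed.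

Lemma ev_ccons X Y x s : ev X Y (ccons x s) = tm (timg X Y x) (ev X Y s).
Proof.
case: s => [|y s] //=. case: ifP => // /eqP ->.
by rewrite -tmA timg_linv tm0t.
Qed.

Lemma ev_reduce X Y s : ev X Y (reduce s) = ev X Y s.
Proof. elim: s => [|x s IH] //=. by rewrite ev_ccons IH. Qed.

Definition sg (x : letter) : R := if x.2 then -1 else 1.
Definition ib (x : letter) : R := (x.2)%:R.
Fixpoint ea s : R := if s is x :: s' then (if x.1 then 0 else sg x) + ea s' else 0.
Fixpoint eb s : R := if s is x :: s' then (if x.1 then sg x else 0) + eb s' else 0.
Fixpoint cA s : R := if s is x :: s' then
  (if x.1 then 0 else ib x + sg x * ea s') + cA s' else 0.
Fixpoint cB s : R := if s is x :: s' then
  (if x.1 then 0 else sg x * eb s') + cB s' else 0.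
Fixpoint cC s : R := if s is x :: s' then
  (if x.1 then sg x * ea s' else 0) + cC s' else 0.
Fixpoint cD s : R := if s is x :: s' then
  (if x.1 then ib x + sg x * eb s' else 0) + cD s' else 0.

Lemma ev_formula x1 x2 x3 y1 y2 y3 s :
  ev (x1,x2,x3) (y1,y2,y3) s =
  (ea s * x1 + eb s * y1, ea s * x2 + eb s * y2,
   ea s * x3 + eb s * y3 + cA s * (x1 * x2) + cB s * (x1 * y2)
   + cC s * (y1 * x2) + cD s * (y1 * y2)).
Proof.
elim: s => [|x s IH] /=; first by congr (_,_,_); ring.
rewrite IH; case: x => [[] []]; rewrite /tm /timg /tinv /sg /ib /=;
  congr (_,_,_); ring.
Qed.

Lemma cA2 s : cA s *+ 2 = ea s ^+ 2 - ea s.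
Proof.
elim: s => [|x s IH] /=; first by rewrite mul0rn expr0n /= subr0.
rewrite mulrnDl IH; case: x => [[] []]; rewrite /sg /ib /=; ring.
Qed.
Lemma cD2 s : cD s *+ 2 = eb s ^+ 2 - eb s.
Proof.
elim: s => [|x s IH] /=; first by rewrite mul0rn expr0n /= subr0.
rewrite mulrnDl IH; case: x => [[] []]; rewrite /sg /ib /=; ring.
Qed.
Lemma cBC s : cB s + cC s = ea s * eb s.
Proof.
elim: s => [|x s IH] /=; first by rewrite addr0 mul0r.
have -> : forall a b c d : R, a + b + (c + d) = a + c + (b + d) by move=> *; ring.
rewrite IH; case: x => [[] []]; rewrite /sg /ib /=; ring.
Qed.

Lemma key (h : R) (Hh : h *+ 2 = 1) s X Y :
  ev (1,0,0) (0,1,0) s = t0 -> ev X Y s = t0.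
Proof.
rewrite ev_formula => -[].
rewrite !(mulr1, mulr0, addr0, add0r) => Ea Eb EB.
have EA : cA s = 0 by rewrite -[cA s]mul1r -Hh mulrnAl -mulrnAr cA2 Ea; ring.
have ED : cD s = 0 by rewrite -[cD s]mul1r -Hh mulrnAl -mulrnAr cD2 Eb; ring.
have EC : cC s = 0 by move: (cBC s); rewrite EB Ea add0r mul0r.
case: X => [[x1 x2] x3]; case: Y => [[y1 y2] y3].
rewrite ev_formula Ea Eb EA EC ED EB /t0; congr (_,_,_); ring.
Qed.
End Trip.

Section Mat.
Variable R : comUnitRingType.
Definition U (t : trip R) : 'M[R]_3 := \matrix_(i, j)
  if i == j then 1 else if (val i == 0%N) && (val j == 1%N) then t.1.1
  else if (val i == 1%N) && (val j == 2%N) then t.1.2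
  else if (val i == 0%N) && (val j == 2%N) then t.2 else 0.

Lemma UM t u : U t *m U u = U (tm t u).
Proof.
apply/matrixP => i j; rewrite !mxE !big_ord_recr big_ord0 /= !mxE.
case: t => [[a b] c]; case: u => [[d e] f]; rewrite /tm /=.
case: i => [[|[|[|i]]] Hi] //; case: j => [[|[|[|j]]] Hj] //=; ring.
Qed.

Lemma U0 : U (t0 R) = 1%:M.
Proof.
apply/matrixP => i j; rewrite !mxE.
case: i => [[|[|[|i]]] Hi] //; case: j => [[|[|[|j]]] Hj] //=.
Qed.

Lemma Uinj t u : U t = U u -> t = u.
Proof.
case: t => [[a b] c]; case: u => [[d e] f] H.
have H1 := congr1 (fun M : 'M[R]_3 => M (Ordinal (isT : 0 < 3)%N) (Ordinal (isT : 1 < 3)%N)) H.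
have H2 := congr1 (fun M : 'M[R]_3 => M (Ordinal (isT : 1 < 3)%N) (Ordinal (isT : 2 < 3)%N)) H.
have H3 := congr1 (fun M : 'M[R]_3 => M (Ordinal (isT : 0 < 3)%N) (Ordinal (isT : 2 < 3)%N)) H.
move: H1 H2 H3; rewrite /= !mxE /= => -> -> ->. by [].
Qed.

Lemma Uinv t : invmx (U t) = U (tinv t).
Proof.
have H : U t *m U (tinv t) = 1%:M by rewrite UM tmV U0.
have [Hu _] := mulmx1_unit H.
by rewrite -[invmx _]mulmx1 -H mulmxA mulVmx // mul1mx.
Qed.
End Mat.

Lemma i1E : i1 = Ordinal (isT : 0 < 3)%N. Proof. by apply: val_inj; rewrite /= inordK. Qed.
Lemma i2E : i2 = Ordinal (isT : 1 < 3)%N. Proof. by apply: val_inj; rewrite /= inordK. Qed.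
Lemma i3E : i3 = Ordinal (isT : 2 < 3)%N. Proof. by apply: val_inj; rewrite /= inordK. Qed.

Lemma alphaU n : alphaH n = U (1, 0, 0).
Proof.
apply/matrixP => i j; rewrite /alphaH i1E i2E !mxE.
case: i => [[|[|[|i]]] Hi] //; case: j => [[|[|[|j]]] Hj] //=; rewrite ?addr0 ?add0r //.
Qed.
Lemma betaU n : betaH n = U (0, 1, 0).
Proof.
apply/matrixP => i j; rewrite /betaH i3E i2E !mxE.
case: i => [[|[|[|i]]] Hi] //; case: j => [[|[|[|j]]] Hj] //=; rewrite ?addr0 ?add0r //.
Qed.

Lemma heisU n (w : F2) : heis_map n w = U (ev (1,0,0) (0,1,0) (wordF2 w)).
Proof.
rewrite /heis_map; elim: (wordF2 w) => [|x s IH] /=; first by rewrite U0.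
rewrite IH -UM; congr (_ *m _).
case: x => [[] []]; rewrite /letter_img /timg /= ?alphaU ?betaU ?Uinv //.
Qed.

Lemma reduce_id s : reducedb s -> reduce s = s.
Proof.
elim: s => [|x s IH] //= Hs.
have Hs' : reducedb s by case: s Hs {IH} => [|y s] // /andP[].
rewrite IH //; case: s Hs {IH Hs'} => [|y s] //= /andP[H _].
by rewrite (negbTE H).
Qed.

Lemma F2_ext u v : wordF2 u = wordF2 v -> u = v.
Proof.
case: u => wu hu; case: v => wv hv /= E; subst wv.
by rewrite (bool_irrelevance hu hv).
Qed.

Definition ofseq s := MkF2 (reducedb_reduce s).

Lemma ofseq_cons x s : ofseq (x :: s) = mulF2 (ofseq [:: x]) (ofseq s).
Proof.
apply: F2_ext => /=. by rewrite (reduce_id (reducedb_reduce s)).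
Qed.

Lemma ofseq_word w : ofseq (wordF2 w) = w.
Proof. apply: F2_ext => /=; apply: reduce_id; exact: wordF2_red. Qed.

Section Hom.
Variable R : comNzRingType.
Variables (X0 Y0 : trip R).
Definition Ew w := ev X0 Y0 (wordF2 w).
Lemma EwM u v : Ew (mulF2 u v) = tm (Ew u) (Ew v).
Proof. by rewrite /Ew /= ev_reduce ev_cat. Qed.

Variable phi : F2 -> F2.
Hypothesis Hphi : F2_hom phi.
Definition psi w := Ew (phi w).
Lemma psiM u v : psi (mulF2 u v) = tm (psi u) (psi v).
Proof. by rewrite /psi Hphi EwM. Qed.

Definition Xp := psi (ofseq [:: (false, false)]).
Definition Yp := psi (ofseq [:: (true, false)]).

Lemma psi1 : psi (ofseq [::]) = t0 R.
Proof.
have E : mulF2 (ofseq [::]) (ofseq [::]) = ofseq [::] by apply: F2_ext.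
apply: tidem; have H := psiM (ofseq [::]) (ofseq [::]); rewrite E in H; exact: (esym H).
Qed.

Lemma psi_letter x : psi (ofseq [:: x]) = timg Xp Yp x.
Proof.
case: x => g [|]; last by case: g.
rewrite /timg /=; apply: tinv_uniq.
have E : mulF2 (ofseq [:: (g, false)]) (ofseq [:: (g, true)]) = ofseq [::].
  by apply: F2_ext => /=; case: g.
have H := psiM (ofseq [:: (g, false)]) (ofseq [:: (g, true)]).
rewrite E psi1 in H; rewrite H; by case: g H E.
Qed.

Lemma psi_ofseq s : psi (ofseq s) = ev Xp Yp s.
Proof.
elim: s => [|x s IH]; first exact: psi1.
by rewrite ofseq_cons psiM IH psi_letter.
Qed.

Lemma psi_word w : psi w = ev Xp Yp (wordF2 w).
Proof. by rewrite -psi_ofseq ofseq_word. Qed.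
End Hom.

Lemma R_HeisE n w : R_Heis n w <-> Ew (1,0,0) (0,1,0) w = t0 'Z_n.
Proof.
rewrite /R_Heis heisU -U0; split; first exact: Uinj.
by rewrite /Ew => ->.
Qed.

Lemma half_inv n : odd n -> (1 < n)%N -> ((n.+1)./2%:R : 'Z_n) *+ 2 = 1.
Proof.
move=> Ho Hn.
have -> : ((n.+1)./2%:R : 'Z_n) *+ 2 = ((n.+1)./2 * 2)%:R by rewrite natrM mulr_natr.
rewrite muln2 halfK /= Ho subn0 -natr1 pchar_Zp // add0r; reflexivity.
Qed.

Lemma hom_pres n (Hn : (1 < n)%N) (Ho : odd n) phi : F2_hom phi ->
  forall w, R_Heis n w -> R_Heis n (phi w).
Proof.
move=> Hphi w /R_HeisE Hw; apply/R_HeisE.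
have := psi_word (1,0,0) (0,1,0) Hphi w; rewrite /psi => ->.
exact: (key (half_inv Ho Hn)).
Qed.

Local Close Scope ring_scope.
Theorem lemma2p16 (n : nat) (Hn : 3 <= n) (Hodd : odd n) (phi : F2 -> F2) :
  F2_aut phi ->
  (* phi(R) = R, i.e. phi(R) ⊆ R and R ⊆ phi(R) *)
  (forall w, R_Heis n w -> R_Heis n (phi w)) /\
  (forall y, R_Heis n y -> exists w, R_Heis n w /\ phi w = y).
Proof.
move=> [Hphi [g Hgp Hpg]].
have Hn1 : 1 < n by apply: leq_trans Hn.
split; first exact: hom_pres.
have Hg : F2_hom g.
  move=> u v; apply: (can_inj Hgp); by rewrite Hphi !Hpg.
move=> y Hy; exists (g y); split; last exact: Hpg.
exact: hom_pres.
Qed.
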